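(* Let $\mathcal V$ be a descent category, $k$ a positive integer, and $X$ a $k$-category in $\mathcal V$. Then $X$ is $(k+1)$-coskeletal: for every $n\ge0$ the natural morphism $X_n\to\mathrm{Map}(\mathrm{sk}_{k+1}\Delta^n,X)$ is an isomorphism.
   Context: A descent category is a small category $\mathcal V$ with a subcategory of morphisms called covers such that: $\mathcal V$ has finite limits; pullbacks of covers are covers; if $f$ and $g\circ f$ are covers then $g$ is a cover. A simplicial space is a simplicial object in $\mathcal V$; for a finite simplicial set $T$, $\mathrm{Map}(T,X)$ is the finite limit representing simplicial maps $T\to X$; $\mathrm{sk}_{j}\Delta^n$ is the $j$-skeleton. $\Lambda^n_i=\bigcup_{j\ne i}\partial_j\Delta^n$. $\boldsymbol\Delta^1$ is the nerve of the groupoid with objects $\{0,1\}$ and exactly one morphism between any two objects, and $\mathrm{Map}(\boldsymbol\Delta^1,X)$ the limit representing simplicial maps $\boldsymbol\Delta^1\to X$. A $k$-category is a simplicial space $X$ such that $X_n\to\mathrm{Map}(\Lambda^n_i,X)$ is a cover for $0<i<n$ and an isomorphism for $n>k$, and $\mathrm{Map}(\boldsymbol\Delta^1,X)\to X_0$ (restriction to a vertex) is a cover. *)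

(* Defs.v *)
From mathcomp Require Import all_boot.

Set Implicit Arguments.
Unset Strict Implicit.
Unset Printing Implicit Defensive.

Record Cat := {
  Ob :> Type;
  Hom : Ob -> Ob -> Type;
  idm : forall a, Hom a a;
  comp : forall a b c, Hom b c -> Hom a b -> Hom a c;
  comp_id_l : forall a b (f : Hom a b), comp (idm b) f = f;
  comp_id_r : forall a b (f : Hom a b), comp f (idm a) = f;
  comp_assoc : forall a b c d (h : Hom c d) (g : Hom b c) (f : Hom a b),
      comp h (comp g f) = comp (comp h g) f
}.

Arguments Hom {C} : rename.
Arguments idm {C} a : rename.
Arguments comp {C a b c} : rename.

Definition is_iso (C : Cat) (a b : C) (f : Hom a b) : Prop :=
  exists g : Hom b a, comp g f = idm a /\ comp f g = idm b.

Definition is_terminal (C : Cat) (t : C) : Prop :=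
  forall a : C, exists! h : Hom a t, True.

Definition is_pullback (C : Cat) (A B Z P : C) (f : Hom A Z) (g : Hom B Z)
  (p1 : Hom P A) (p2 : Hom P B) : Prop :=
  comp f p1 = comp g p2 /\
  forall (U : C) (u1 : Hom U A) (u2 : Hom U B), comp f u1 = comp g u2 ->
    exists! h : Hom U P, comp p1 h = u1 /\ comp p2 h = u2.

Definition has_finite_limits (C : Cat) : Prop :=
  (exists t : C, is_terminal t) /\
  forall (A B Z : C) (f : Hom A Z) (g : Hom B Z),
    exists (P : C) (p1 : Hom P A) (p2 : Hom P B), is_pullback f g p1 p2.

Record DescentCat := {
  dcat :> Cat;
  cover : forall a b : dcat, Hom a b -> Prop;
  dcat_finlim : has_finite_limits dcat;
  cover_id : forall a : dcat, cover (idm a);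
  cover_comp : forall (a b c : dcat) (g : Hom b c) (f : Hom a b),
      cover f -> cover g -> cover (comp g f);
  cover_pullback : forall (A B Z P : dcat) (f : Hom A Z) (g : Hom B Z)
      (p1 : Hom P A) (p2 : Hom P B),
      is_pullback f g p1 p2 -> cover f -> cover p2;
  cover_cancel : forall (a b c : dcat) (g : Hom b c) (f : Hom a b),
      cover f -> cover (comp g f) -> cover g
}.

Arguments cover {d a b} : rename.

(* The simplex category: monotone maps [m] -> [n], [m] = 'I_m.+1       *)

Record mono (m n : nat) := Mono {
  mfun :> 'I_m.+1 -> 'I_n.+1;
  mfun_homo : {homo mfun : x y / (x <= y)%N}
}.

Definition mono_id (n : nat) : mono n n := @Mono n n id (fun x y h => h).

Definition mono_comp (k m n : nat) (f : mono m n) (g : mono k m) : mono k n :=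
  @Mono k n (fun x => f (g x))
    (fun x y h => mfun_homo f (mfun_homo g h)).

Record sobj (C : Cat) := {
  sob :> nat -> C;
  sact : forall m n, mono m n -> Hom (sob n) (sob m);
  sact_id : forall n, sact (mono_id n) = idm (sob n);
  sact_comp : forall k m n (f : mono m n) (g : mono k m),
      sact (mono_comp f g) = comp (sact g) (sact f)
}.

Arguments sact {C} s {m n} : rename.

Record sset := {
  simp : nat -> Type;
  ract : forall m m', mono m' m -> simp m -> simp m'
}.

Arguments ract s {m m'} : rename.

(* Sub-simplicial sets of Delta^n determined by a downward closed family Q
   of faces (vertex sets): the m-simplices are the monotone maps
   [m] -> [n] whose image is in Q. *)
Definition mimage (m n : nat) (f : mono m n) : {set 'I_n.+1} :=
  [set f x | x : 'I_m.+1].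

Lemma mimage_comp (k m n : nat) (f : mono m n) (g : mono k m) :
  mimage (mono_comp f g) \subset mimage f.
Proof.
apply/subsetP => y /imsetP [x _ ->]; apply/imsetP; by exists (g x).
Qed.

Definition down_closed (n : nat) (Q : {set 'I_n.+1} -> bool) : Prop :=
  forall A B : {set 'I_n.+1}, B \subset A -> Q A -> Q B.

Definition sub_std (n : nat) (Q : {set 'I_n.+1} -> bool)
  (HQ : down_closed Q) : sset :=
  {| simp := fun m => {f : mono m n | Q (mimage f)};
     ract := fun m m' g s =>
       exist _ (mono_comp (sval s) g)
         (HQ _ _ (mimage_comp (sval s) g) (svalP s)) |}.

(* j-skeleton of Delta^n: faces with at most j+1 vertices *)
Definition skel_pred (n j : nat) (A : {set 'I_n.+1}) : bool := (#|A| <= j.+1)%N.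
Arguments skel_pred : clear implicits.

Lemma skel_closed n j : down_closed (skel_pred n j).
Proof.
move=> A B sBA; rewrite /skel_pred => h; exact: leq_trans (subset_leq_card sBA) h.
Qed.

Definition skel (j n : nat) : sset := sub_std (@skel_closed n j).

(* horn Lambda^n_i = union of the faces d_j Delta^n, j <> i
   (d_j Delta^n = faces missing the vertex j) *)
Definition horn_pred (n : nat) (i : 'I_n.+1) (A : {set 'I_n.+1}) : bool :=
  [exists j : 'I_n.+1, (j != i) && (j \notin A)].
Arguments horn_pred : clear implicits.

Lemma horn_closed n i : down_closed (horn_pred n i).
Proof.
move=> A B sBA /existsP [j /andP [ji jA]]; apply/existsP; exists j.
rewrite ji /=; apply/negP => jB; move/negP: jA; apply; exact: (subsetP sBA).
Qed.

Definition horn (n : nat) (i : 'I_n.+1) : sset := sub_std (@horn_closed n i).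

Definition sub_incl (n : nat) (Q : {set 'I_n.+1} -> bool) (HQ : down_closed Q)
  (m : nat) (s : simp (sub_std HQ) m) : mono m n := sval s.

(* bold Delta^1: nerve of the groupoid with objects {0,1} and exactly one
   morphism between any two objects; its m-simplices are all maps
   [m] -> {0,1} *)
Definition bDelta1 : sset :=
  {| simp := fun m => 'I_m.+1 -> 'I_2;
     ract := fun m m' g s => fun x => s (g x) |}.

Definition bvertex0 : simp bDelta1 0 := fun _ => ord0.

(* Map(T, X) as the finite limit representing simplicial maps T -> X  *)

(* a simplicial map T -> Hom(U, X_.) , i.e. a cone with vertex U *)
Definition is_scone (C : Cat) (X : sobj C) (T : sset) (U : C)
  (c : forall m, simp T m -> Hom U (X m)) : Prop :=
  forall m m' (g : mono m' m) (s : simp T m),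
    c m' (ract T g s) = comp (sact X g) (c m s).
Arguments is_scone {C} X {T U} c.

Definition is_Map (C : Cat) (X : sobj C) (T : sset) (M : C)
  (pi : forall m, simp T m -> Hom M (X m)) : Prop :=
  is_scone X pi /\
  forall (U : C) (c : forall m, simp T m -> Hom U (X m)), is_scone X c ->
    exists! h : Hom U M, forall m s, comp (pi m s) h = c m s.
Arguments is_Map {C} X {T M} pi.

(* h : X_n -> Map(T, X) is the natural morphism induced by the inclusion
   T = sub_std HQ  ⊆  Delta^n *)
Definition is_natmap (C : Cat) (X : sobj C) (n : nat)
  (Q : {set 'I_n.+1} -> bool) (HQ : down_closed Q) (M : C)
  (pi : forall m, simp (sub_std HQ) m -> Hom M (X m)) (h : Hom (X n) M) : Prop :=
  forall m s, comp (pi m s) h = sact X (sub_incl s).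
Arguments is_natmap {C X n Q} HQ {M} pi h.

Definition is_kcat (V : DescentCat) (k : nat) (X : sobj V) : Prop :=
  (forall (n : nat) (i : 'I_n.+1), (0 < i)%N -> (i < n)%N ->
     forall (M : V) pi (h : Hom (X n) M),
       is_Map X pi -> is_natmap (@horn_closed n i) pi h ->
       cover h /\ ((k < n)%N -> is_iso h)) /\
  (forall (M : V) (pi : forall m, simp bDelta1 m -> Hom M (X m)),
     is_Map X pi -> cover (pi 0%N bvertex0)).

(* Main.v *)
Require Import Defs.
From mathcomp Require Import all_boot.
From Stdlib Require Import FunctionalExtensionality ProofIrrelevance.
From mathcomp Require Import zify.

Local Notation comp := Defs.comp (only parsing).

Set Implicit Arguments.
Unset Strict Implicit.
Unset Printing Implicit Defensive.

Lemma mono_eq m n (f g : mono m n) : (forall x, f x = g x) -> f = g.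
Proof.
case: f g => [f hf] [g hg] /= E.
have E' : f = g by apply: functional_extensionality.
subst g; congr Mono; apply: proof_irrelevance.
Qed.

Lemma mono_compA k l m n (f : mono m n) (g : mono l m) (h : mono k l) :
  mono_comp f (mono_comp g h) = mono_comp (mono_comp f g) h.
Proof. by apply: mono_eq. Qed.

Lemma mono_comp_id_l m n (f : mono m n) : mono_comp (mono_id n) f = f.
Proof. by apply: mono_eq. Qed.

Lemma mimage_compE k m n (f : mono m n) (g : mono k m) :
  mimage (mono_comp f g) = f @: mimage g.
Proof.
rewrite /mimage -imset_comp; apply/setP => y; apply/imsetP/imsetP.
  by case=> x _ ->; exists x.
by case=> x _ ->; exists x.
Qed.

Lemma mimage_card m n (f : mono m n) : (#|mimage f| <= n.+1)%N.
Proof. by have := max_card (mimage f); rewrite card_ord. Qed.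

Lemma notin_mimage m n (f : mono m n) j : (j \notin mimage f) = [forall x, f x != j].
Proof.
apply/idP/forallP.
  by move=> H x; apply/eqP => E; move/negP: H; apply; rewrite -E; apply/imsetP; exists x.
by move=> H; apply/imsetP => [[x _ E]]; move: (H x); rewrite E eqxx.
Qed.

Lemma lift_homo N (j : 'I_N.+2) : {homo (lift j) : x y / (x <= y)%N}.
Proof.
move=> x y /= le; rewrite /bump; case: (leqP j x); case: (leqP j y) => /= ? ?; lia.
Qed.

Definition dface N (j : 'I_N.+2) : mono N N.+1 := Mono (@lift_homo N j).

Definition pt N (j p : 'I_N.+2) : 'I_N.+1 := inord (minn (unbump j p) N).

Lemma pt_homo N (j : 'I_N.+2) : {homo (pt j) : x y / (x <= y)%N}.
Proof.
move=> x y le; rewrite /pt !inordK; try (apply: leq_ltn_trans (geq_minr _ _) _; done).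
have : (unbump j x <= unbump j y)%N.
  rewrite /unbump; case: (ltnP j x); case: (ltnP j y) => /= ? ?; lia.
lia.
Qed.

Lemma lift_pt N (j p : 'I_N.+2) : p != j -> lift j (pt j p) = p.
Proof.
move=> pj; apply: val_inj; rewrite /= /pt inordK; last by apply: leq_ltn_trans (geq_minr _ _) _.
have hp := ltn_ord p; have hj := ltn_ord j.
move: pj; rewrite -val_eqE /= /bump /unbump => pj.
case: (ltnP j p) => /= H; rewrite ?subn0.
  have -> : minn (p - 1) N = p - 1 by apply/minn_idPl; lia.
  case: leqP; lia.
have -> : minn p N = p by apply/minn_idPl; lia.
case: leqP; lia.
Qed.

Lemma pt_lift N (j : 'I_N.+2) i : pt j (lift j i) = i.
Proof.
apply: val_inj; rewrite /pt /= bumpK inordK; last by apply: leq_ltn_trans (geq_minr _ _) _.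
apply/minn_idPl; have /= := ltn_ord i; lia.
Qed.

Definition factor N (j : 'I_N.+2) m (f : mono m N.+1) : mono m N :=
  @Mono m N (fun x => pt j (f x)) (fun x y h => pt_homo j (mfun_homo f h)).

Lemma factorK N (j : 'I_N.+2) m (f : mono m N.+1) :
  j \notin mimage f -> mono_comp (dface j) (factor j f) = f.
Proof.
rewrite notin_mimage => /forallP H; apply: mono_eq => x /=; exact: lift_pt.
Qed.

Lemma factor_comp N (j : 'I_N.+2) m m' (f : mono m N.+1) (g : mono m' m) :
  factor j (mono_comp f g) = mono_comp (factor j f) g.
Proof. by apply: mono_eq. Qed.

Lemma factor_d N (j : 'I_N.+2) m (g : mono m N) :
  factor j (mono_comp (dface j) g) = g.
Proof. by apply: mono_eq => x /=; exact: pt_lift. Qed.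

Lemma card_mimage_d N (j : 'I_N.+2) m (g : mono m N) :
  #|mimage (mono_comp (dface j) g)| = #|mimage g|.
Proof. by rewrite mimage_compE card_imset //; exact: lift_inj. Qed.

Lemma j_notin_d N (j : 'I_N.+2) m (g : mono m N) : j \notin mimage (mono_comp (dface j) g).
Proof. by rewrite notin_mimage; apply/forallP => x /=; rewrite eq_sym neq_lift. Qed.
Section PMap.
Variables (C : Cat) (X : sobj C).

Definition pcone n (P : {set 'I_n.+1} -> bool) (U : C)
  (c : forall m (f : mono m n), P (mimage f) -> Hom U (X m)) : Prop :=
  forall m m' (g : mono m' m) (f : mono m n) (H : P (mimage f))
    (H' : P (mimage (mono_comp f g))),
    c m' (mono_comp f g) H' = comp (sact X g) (c m f H).

Definition pMap n (P : {set 'I_n.+1} -> bool) (M : C)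
  (pi : forall m (f : mono m n), P (mimage f) -> Hom M (X m)) : Prop :=
  pcone pi /\ forall U c, @pcone n P U c ->
    exists! h : Hom U M, forall m f H, comp (pi m f H) h = c m f H.
Arguments pMap {n} P M pi.
Arguments pcone {n P U} c.

Lemma cone_irr n (P : {set 'I_n.+1} -> bool) U
  (c : forall m (f : mono m n), P (mimage f) -> Hom U (X m)) m f g H H' :
  f = g -> c m f H = c m g H'.
Proof. by move=> E; subst g; rewrite (bool_irrelevance H H'). Qed.

Lemma cone_pf n (P : {set 'I_n.+1} -> bool) U
  (c : forall m (f : mono m n), P (mimage f) -> Hom U (X m)) m f H H' :
  c m f H = c m f H'.
Proof. by rewrite (bool_irrelevance H H'). Qed.

Lemma pcone_comp n (P : {set 'I_n.+1} -> bool) U V c (u : Hom V U) :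
  pcone c -> @pcone n P V (fun m f H => comp (c m f H) u).
Proof. by move=> Hc m m' g f H H'; rewrite (Hc _ _ _ _ H) comp_assoc. Qed.

Lemma pMap_uniq n (P : {set 'I_n.+1} -> bool) M pi :
  pMap P M pi -> forall U (h1 h2 : Hom U M),
  (forall m f H, comp (pi m f H) h1 = comp (pi m f H) h2) -> h1 = h2.
Proof.
move=> [Hpi Hu] U h1 h2 E.
have [h [_ Uq]] := Hu U _ (pcone_comp h1 Hpi).
by rewrite -(Uq h1 (fun _ _ _ => erefl)) (Uq h2 (fun m f H => esym (E m f H))).
Qed.

Definition ncone n (P : {set 'I_n.+1} -> bool) U (x : Hom U (X n)) :=
  fun m (f : mono m n) (_ : P (mimage f)) => comp (sact X f) x.
Arguments ncone {n} P {U} x.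

Lemma ncone_pcone n (P : {set 'I_n.+1} -> bool) U (x : Hom U (X n)) :
  pcone (ncone P x).
Proof. by move=> m m' g f H H'; rewrite /ncone sact_comp comp_assoc. Qed.

Definition Ext n (P : {set 'I_n.+1} -> bool) (U : C) : Prop :=
  forall c, @pcone n P U c ->
    exists! x : Hom U (X n), forall m f H, comp (sact X f) x = c m f H.
Arguments Ext {n} P U.

Definition pnat n (P : {set 'I_n.+1} -> bool) M
  (pi : forall m (f : mono m n), P (mimage f) -> Hom M (X m)) (h : Hom (X n) M) :=
  forall m f H, comp (pi m f H) h = sact X f.
Arguments pnat {n P M} pi h.

Lemma ext_of_iso n (P : {set 'I_n.+1} -> bool) M pi h :
  pMap P M pi -> pnat pi h -> is_iso h -> forall U, Ext P U.
Proof.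
move=> HM Hn [g [gh hg]] U c Hc.
have [u [Hu Uq]] := HM.2 U c Hc.
exists (comp g u); split.
  move=> m f H; rewrite -(Hn m f H) -comp_assoc (comp_assoc h g u) hg comp_id_l.
  exact: Hu.
move=> x Hx; have -> : u = comp h x.
  apply: Uq => m f H; by rewrite comp_assoc Hn Hx.
by rewrite comp_assoc gh comp_id_l.
Qed.

Lemma iso_of_ext n (P : {set 'I_n.+1} -> bool) M pi h :
  pMap P M pi -> pnat pi h -> Ext P M -> Ext P (X n) -> is_iso h.
Proof.
move=> HM Hn EM EX.
have [g [Hg _]] := EM pi HM.1.
exists g; split.
  have [x [_ Uq]] := EX _ (@ncone_pcone _ P _ (idm (X n))).
  have E1 := Uq (idm (X n)) (fun m f H => erefl).
  have E2 : x = comp g h.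
    by apply: Uq => m f H; rewrite /ncone comp_assoc Hg Hn comp_id_r.
  by rewrite E2 in E1.
apply: (pMap_uniq HM) => m f H.
by rewrite comp_assoc Hn Hg comp_id_r.
Qed.

Lemma pMap_of_isMap n (Q : {set 'I_n.+1} -> bool) (HQ : down_closed Q) M
  (pi : forall m, simp (sub_std HQ) m -> Hom M (X m)) :
  is_Map X pi -> pMap Q M (fun m f H => pi m (exist _ f H)).
Proof.
move=> [Hs Hu]; split.
  move=> m m' g f H H'; rewrite -(Hs m m' g (exist _ f H)) /=.
  by congr (pi _ _); apply: eq_exist_uncurried; exists erefl; apply: bool_irrelevance.
move=> U c Hc.
have Hs' : is_scone X (T := sub_std HQ) (fun m s => c m (sval s) (proj2_sig s)).
  by move=> m m' g [f H] /=; apply: Hc.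
have [h [Hh Uq]] := Hu U _ Hs'.
exists h; split; first by move=> m f H; exact: (Hh m (exist _ f H)).
by move=> h' Hh'; apply: Uq => m [f H]; exact: Hh'.
Qed.

Lemma isMap_of_pMap n (Q : {set 'I_n.+1} -> bool) (HQ : down_closed Q) M
  (pi : forall m (f : mono m n), Q (mimage f) -> Hom M (X m)) :
  pMap Q M pi -> is_Map X (T := sub_std HQ) (fun m s => pi m (sval s) (proj2_sig s)).
Proof.
move=> [Hs Hu]; split.
  by move=> m m' g [f H] /=; apply: Hs.
move=> U c Hc.
have Hc' : pcone (fun m f H => c m (exist _ f H)).
  move=> m m' g f H H'; rewrite -(Hc m m' g (exist _ f H)) /=.
  by congr (c _ _); apply: eq_exist_uncurried; exists erefl; apply: bool_irrelevance.
have [h [Hh Uq]] := Hu U _ Hc'.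
exists h; split; first by move=> m [f H]; exact: (Hh m f H).
by move=> h' Hh'; apply: Uq => m f H; exact: (Hh' m (exist _ f H)).
Qed.

End PMap.
Arguments pMap {C} X {n} P M pi.
Arguments pcone {C} X {n P U} c.
Arguments Ext {C} X {n} P U.
Arguments pnat {C} X {n P M} pi h.
Arguments ncone {C} X {n} P {U} x.
Definition borP (b1 b2 : bool) (A : Type) (F1 : b1 -> A) (F2 : b2 -> A)
  (H : b1 || b2) : A :=
  (if b1 as b return (b -> A) -> (b || b2) -> A
   then fun F _ => F erefl else fun _ H => F2 H) F1 H.

Lemma borP_l (b1 b2 : bool) A (F1 : b1 -> A) (F2 : b2 -> A) (H : b1 || b2) (h1 : b1) : borP F1 F2 H = F1 h1.
Proof.
move: F1 H h1; case: b1 => F1 H h1 //=; by rewrite (eq_irrelevance h1 erefl).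
Qed.

Lemma borP_r (b1 b2 : bool) A (F1 : b1 -> A) (F2 : b2 -> A) (H : b1 || b2) (h2 : b2) : ~~ b1 -> borP F1 F2 H = F2 h2.
Proof.
move: F1 H; case: b1 => F1 H //= _; by rewrite (eq_irrelevance H h2).
Qed.

Lemma orl (b1 b2 : bool) : b1 -> b1 || b2. Proof. by move->. Qed.
Lemma orr (b1 b2 : bool) : b2 -> b1 || b2. Proof. by move->; rewrite orbT. Qed.
Lemma andl (b1 b2 : bool) : b1 && b2 -> b1. Proof. by case/andP. Qed.
Lemma andr (b1 b2 : bool) : b1 && b2 -> b2. Proof. by case/andP. Qed.

Section Constr.
Variables (C : Cat) (X : sobj C).

Lemma pcone_restr n (P Q : {set 'I_n.+1} -> bool) (E : forall B, Q B -> P B) U c :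
  pcone X (P := P) (U := U) c -> pcone X (fun m f H => c m f (E _ H)).
Proof. by move=> Hc m m' g f H H'; apply: Hc. Qed.

Lemma pMap_empty n (P : {set 'I_n.+1} -> bool) (t : C) : is_terminal t ->
  (forall m (f : mono m n), ~~ P (mimage f)) ->
  exists pi, pMap X P t pi.
Proof.
move=> Ht Hno.
exists (fun m f H => False_rect _ (elimT negP (Hno m f) H)); split.
  by move=> m m' g f H; exfalso; move: (Hno m f); rewrite H.
move=> U c _; have [h [_ Uq]] := Ht U; exists h; split.
  by move=> m f H; exfalso; move: (Hno m f); rewrite H.
by move=> h' _; apply: Uq.
Qed.

Lemma pMap_full m0 :
  pMap X (fun _ : {set 'I_m0.+1} => true) (X m0) (fun m f _ => sact X f).
Proof.
split; first by move=> m m' g f H H'; rewrite sact_comp.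
move=> U c Hc; exists (c m0 (mono_id m0) erefl); split.
  move=> m f H; rewrite -(Hc _ _ f (mono_id m0) erefl H).
  by rewrite mono_comp_id_l.
move=> h' Hh'; by rewrite -(Hh' m0 (mono_id m0) erefl) sact_id comp_id_l.
Qed.

Lemma pMap_ext n (P1 P2 : {set 'I_n.+1} -> bool) (E : forall B, P2 B -> P1 B)
  (E' : forall B, P1 B -> P2 B) M pi :
  pMap X P1 M pi -> pMap X P2 M (fun m f H => pi m f (E _ H)).
Proof.
move=> [Hpi Hu]; split; first exact: (pcone_restr E Hpi).
move=> U c Hc; have [u [Hu1 Uq]] := Hu U _ (pcone_restr E' Hc).
exists u; split.
  move=> m f H; rewrite Hu1; exact: (cone_pf c).
move=> u' Hu'; apply: Uq => m f H; rewrite (cone_pf pi _ (E _ (E' _ H))).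
rewrite Hu'; exact: (cone_pf c).
Qed.

Lemma castF N (P : {set 'I_N.+2} -> bool) (j : 'I_N.+2)
  (HPj : forall B, P B -> j \notin B) m (f : mono m N.+1) :
  P (mimage f) -> P (lift j @: mimage (factor j f)).
Proof.
move=> H; have := factorK (HPj _ H); move/(congr1 (@mimage _ _)).
by rewrite mimage_compE => ->.
Qed.

Lemma castB N (P : {set 'I_N.+2} -> bool) (j : 'I_N.+2) m (g : mono m N) :
  P (lift j @: mimage g) -> P (mimage (mono_comp (dface j) g)).
Proof. by rewrite mimage_compE. Qed.

Lemma pMap_face N (P : {set 'I_N.+2} -> bool) (j : 'I_N.+2)
  (HPj : forall B, P B -> j \notin B) M pi' :
  pMap X (fun B' : {set 'I_N.+1} => P (lift j @: B')) M pi' ->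
  exists pi, pMap X P M pi.
Proof.
move=> [Hpi Hu].
exists (fun m f H => pi' m (factor j f) (castF HPj H)); split.
  move=> m m' g f H H'; rewrite -(Hpi _ _ g (factor j f) (castF HPj H) (castF HPj H')).
  apply: (cone_irr pi'); exact: factor_comp.
move=> U c Hc.
have Hc' : @pcone _ X _ (fun B => P (lift j @: B)) U (fun m (g : mono m N) (H : is_true (P (lift j @: mimage g))) =>
    c m (mono_comp (dface j) g) (@castB _ P j _ g H)).
  move=> m m' g2 g H H'; rewrite -(Hc _ _ g2 _ (castB H) (castB H')).
  apply: (cone_irr c); exact: mono_compA.
have [u [Hu1 Uq]] := Hu U _ Hc'.
exists u; split.
  move=> m f H; rewrite Hu1; apply: (cone_irr c); exact: factorK (HPj _ H).
move=> u' Hu'; apply: Uq => m g H.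
rewrite -(cone_irr pi' (castF HPj (castB H)) H (factor_d j g)).
exact: Hu'.
Qed.

Lemma pMap_union n (P1 P2 : {set 'I_n.+1} -> bool)
  (D1 : forall m m' (f : mono m n) (g : mono m' m), P1 (mimage f) -> P1 (mimage (mono_comp f g)))
  (D2 : forall m m' (f : mono m n) (g : mono m' m), P2 (mimage f) -> P2 (mimage (mono_comp f g)))
  (PB : forall (A B Z : C) (f : Hom A Z) (g : Hom B Z),
      exists (P : C) (p1 : Hom P A) (p2 : Hom P B), is_pullback f g p1 p2)
  M1 pi1 M2 pi2 M12 pi12 :
  pMap X P1 M1 pi1 -> pMap X P2 M2 pi2 -> pMap X (fun B => P1 B && P2 B) M12 pi12 ->
  exists M pi, pMap X (fun B => P1 B || P2 B) M pi.
Proof.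
move=> HM1 HM2 HM12.
have [r1 [Hr1 _]] := HM12.2 M1 _ (pcone_restr (fun B => @andl (P1 B) (P2 B)) HM1.1).
have [r2 [Hr2 _]] := HM12.2 M2 _ (pcone_restr (fun B => @andr (P1 B) (P2 B)) HM2.1).
have [Pb [p1 [p2 [Hsq Hpb]]]] := PB _ _ _ r1 r2.
pose pi m (f : mono m n) (H : P1 (mimage f) || P2 (mimage f)) :=
  borP (fun h => comp (pi1 m f h) p1) (fun h => comp (pi2 m f h) p2) H.
have piE1 : forall m f H (h1 : P1 (mimage f)), pi m f H = comp (pi1 m f h1) p1.
  by move=> m f H h1; rewrite /pi (borP_l _ _ _ h1).
have piE2 : forall m f H (h2 : P2 (mimage f)), pi m f H = comp (pi2 m f h2) p2.
  move=> m f H h2; case h1 : (P1 (mimage f)).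
    rewrite (piE1 _ _ _ h1).
    have h12 : P1 (mimage f) && P2 (mimage f) by rewrite h1 h2.
    rewrite (cone_pf pi1 h1 (andl h12)) (cone_pf pi2 h2 (andr h12)).
    by rewrite -(Hr1 _ _ h12) -(Hr2 _ _ h12) -!comp_assoc Hsq.
  by rewrite /pi (borP_r _ _ _ h2) ?h1.
exists Pb, pi; split.
  move=> m m' g f H H'; case h1 : (P1 (mimage f)).
    by rewrite (piE1 _ _ _ h1) (piE1 _ _ _ (D1 _ _ _ g h1)) (HM1.1 _ _ g f h1) comp_assoc.
  have h2 : P2 (mimage f) by move: H; rewrite h1.
  by rewrite (piE2 _ _ _ h2) (piE2 _ _ _ (D2 _ _ _ g h2)) (HM2.1 _ _ g f h2) comp_assoc.
move=> U c Hc.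
have [u1 [Hu1 Uq1]] := HM1.2 U _ (pcone_restr (fun B => @orl (P1 B) (P2 B)) Hc).
have [u2 [Hu2 Uq2]] := HM2.2 U _ (pcone_restr (fun B => @orr (P1 B) (P2 B)) Hc).
have E : comp r1 u1 = comp r2 u2.
  apply: (pMap_uniq HM12) => m f H.
  rewrite !comp_assoc Hr1 Hr2 Hu1 Hu2; exact: (@cone_pf _ _ _ (fun B => P1 B || P2 B) _ c).
have [u [[e1 e2] Uqu]] := Hpb U u1 u2 E.
exists u; split.
  move=> m f H; case h1 : (P1 (mimage f)).
    rewrite (piE1 _ _ _ h1) -comp_assoc e1 Hu1; exact: (@cone_pf _ _ _ (fun B => P1 B || P2 B) _ c).
  have h2 : P2 (mimage f) by move: H; rewrite h1.
  rewrite (piE2 _ _ _ h2) -comp_assoc e2 Hu2; exact: (@cone_pf _ _ _ (fun B => P1 B || P2 B) _ c).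
move=> u' Hu'; apply: Uqu; split.
  apply: esym; apply: Uq1 => m f h1.
  by rewrite comp_assoc -(piE1 _ _ (orl (P2 (mimage f)) h1) h1) Hu'.
apply: esym; apply: Uq2 => m f h2.
by rewrite comp_assoc -(piE2 _ _ (orr (P1 (mimage f)) h2) h2) Hu'.
Qed.

End Constr.
Definition FP n (J : {set 'I_n.+1}) (B : {set 'I_n.+1}) : bool :=
  [exists j in J, j \notin B].

Lemma FP_down n (J : {set 'I_n.+1}) m m' (f : mono m n) (g : mono m' m) :
  FP J (mimage f) -> FP J (mimage (mono_comp f g)).
Proof.
case/existsP => j /andP [jJ jf]; apply/existsP; exists j; rewrite jJ /=.
apply/negP => jfg; move/negP: jf; apply; exact: (subsetP (mimage_comp f g)).
Qed.

Lemma FP_split n (J : {set 'I_n.+1}) j B : j \in J ->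
  FP J B = FP (J :\ j) B || (j \notin B).
Proof.
move=> jJ; apply/idP/idP.
  case/existsP => i /andP [iJ iB]; case: (eqVneq i j) => [E|ne].
    by subst i; rewrite iB orbT.
  by apply/orP; left; apply/existsP; exists i; rewrite in_setD1 ne iJ.
case/orP.
  case/existsP => i /andP [iJ iB]; apply/existsP; exists i.
  by move: iJ; rewrite in_setD1 => /andP [_ ->].
by move=> jB; apply/existsP; exists j; rewrite jJ.
Qed.

Lemma j_notin_lift N (j : 'I_N.+2) (B : {set 'I_N.+1}) : j \notin lift j @: B.
Proof. by apply/imsetP => [[x _ E]]; move: (neq_lift j x); rewrite -E eqxx. Qed.

Lemma FP_face N (J : {set 'I_N.+2}) j (B : {set 'I_N.+1}) : j \notin J ->
  FP [set i | lift j i \in J] B = FP J (lift j @: B) && (j \notin lift j @: B).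
Proof.
move=> jJ; rewrite j_notin_lift andbT; apply/idP/idP.
  case/existsP => i /andP; rewrite inE => [[iJ iB]]; apply/existsP; exists (lift j i).
  by rewrite iJ mem_imset //; exact: lift_inj.
case/existsP => i /andP [iJ iB].
have ij : i != j by apply/eqP => E; move: jJ; rewrite -E iJ.
apply/existsP; exists (pt j i); rewrite inE lift_pt // iJ /=.
by apply/negP => H; move/negP: iB; apply; rewrite -(lift_pt ij); apply: imset_f.
Qed.

Section Build.
Variables (C : Cat) (X : sobj C).
Hypothesis Hterm : exists t : C, is_terminal t.
Hypothesis PB : forall (A B Z : C) (f : Hom A Z) (g : Hom B Z),
  exists (P : C) (p1 : Hom P A) (p2 : Hom P B), is_pullback f g p1 p2.

Lemma pMap_ext' n (P1 P2 : {set 'I_n.+1} -> bool) :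
  (forall B, P1 B = P2 B) -> (exists M pi, pMap X P1 M pi) -> exists M pi, pMap X P2 M pi.
Proof.
move=> E [M [pi HM]]; exists M.
have E1 : forall B, P2 B -> P1 B by move=> B; rewrite E.
have E2 : forall B, P1 B -> P2 B by move=> B; rewrite E.
by exists (fun m f H => pi m f (E1 _ H)); apply: pMap_ext HM.
Qed.

Lemma pMap_face' N (P : {set 'I_N.+2} -> bool) (j : 'I_N.+2) :
  (forall B, P B -> j \notin B) ->
  (exists M pi, pMap X (fun B' : {set 'I_N.+1} => P (lift j @: B')) M pi) ->
  exists M pi, pMap X P M pi.
Proof. move=> HPj [M [pi HM]]; exists M; exact: pMap_face HM. Qed.

Lemma build n (J : {set 'I_n.+1}) : exists M pi, pMap X (FP J) M pi.
Proof.
elim: n J => [|N IH] J.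
  have [t Ht] := Hterm; exists t; apply: (@pMap_empty _ X _ (FP J) _ Ht) => m f.
  apply/existsP => [[j /andP [_ jf]]]; move/negP: jf; apply.
  by rewrite (ord1 j); apply/imsetP; exists ord0 => //; rewrite (ord1 (f ord0)).
move Es : #|J| => s; elim: s J Es => [|s IHs] J Es.
  have [t Ht] := Hterm; exists t; apply: (@pMap_empty _ X _ (FP J) _ Ht) => m f.
  apply/existsP => [[j /andP [jJ _]]].
  by move: Es; rewrite (cardD1 j) jJ.
have [j jJ] : exists j, j \in J.
  by apply/card_gt0P; rewrite Es.
have HJ' : #|J :\ j| = s by move: Es; rewrite (cardsD1 j) jJ => -[].
have [M1 [pi1 H1]] := IHs _ HJ'.
have [M2 [pi2 H2]] : exists M pi, pMap X (fun B => j \notin B) M pi.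
  apply: (pMap_face' (j := j)) => //.
  apply: (pMap_ext' (P1 := fun _ => true)) => [B|].
    by rewrite j_notin_lift.
  by exists (X N), (fun m f _ => sact X f); exact: pMap_full.
have [M12 [pi12 H12]] : exists M pi, pMap X (fun B => FP (J :\ j) B && (j \notin B)) M pi.
  apply: (pMap_face' (j := j)) => [B /andP [] //|].
  apply: (pMap_ext' (P1 := FP [set i | lift j i \in J :\ j])) => [B|].
    by rewrite FP_face // in_setD1 eqxx.
  exact: IH.
have [M [pi HM]] := pMap_union (@FP_down _ _) (fun m m' f g (H : is_true (j \notin mimage f)) =>
     (introT negP (fun H2 => elimT negP H (subsetP (mimage_comp f g) _ H2)))) PB H1 H2 H12.
apply: (pMap_ext' (P1 := fun B => FP (J :\ j) B || (j \notin B))).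
  by move=> B; rewrite (FP_split B jJ).
by exists M, pi.
Qed.

End Build.
Lemma exists_missing m n (f : mono m n) : (#|mimage f| < n.+1)%N -> exists j, j \notin mimage f.
Proof.
move=> H; case: (boolP ([set: 'I_n.+1] \subset mimage f)).
  move/subset_leq_card; rewrite cardsT card_ord; lia.
by case/subsetPn => j _ jf; exists j.
Qed.

Lemma factor_dface N (j : 'I_N.+2) : factor j (dface j) = mono_id N.
Proof. by apply: mono_eq => x /=; exact: pt_lift. Qed.

Lemma j_notin_dface N (j : 'I_N.+2) : j \notin mimage (dface j).
Proof. by rewrite notin_mimage; apply/forallP => x /=; rewrite eq_sym neq_lift. Qed.

Lemma notin_comp m m' n (f : mono m n) (g : mono m' m) j :
  j \notin mimage f -> j \notin mimage (mono_comp f g).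
Proof. by move=> H; apply/negP => H2; move/negP: H; apply; exact: (subsetP (mimage_comp f g)). Qed.

Lemma sk_d N kk (j : 'I_N.+2) m (g : mono m N) :
  skel_pred N kk (mimage g) -> skel_pred N.+1 kk (mimage (mono_comp (dface j) g)).
Proof. by rewrite /skel_pred card_mimage_d. Qed.

Lemma sk_factor N kk (j : 'I_N.+2) m (f : mono m N.+1) : j \notin mimage f ->
  skel_pred N.+1 kk (mimage f) -> skel_pred N kk (mimage (factor j f)).
Proof. by move=> H; rewrite /skel_pred -(card_mimage_d j) factorK. Qed.

Section Core.
Variables (C : Cat) (X : sobj C) (k : nat) (U : C).
Hypothesis hk : (0 < k)%N.
Hypothesis HF : forall N, (1 < N.+1)%N -> (k < N.+1)%N ->
  Ext X (horn_pred N.+1 (inord 1)) U.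

Local Notation act g x := (comp (sact X g) x).

Lemma act_comp m m' n (f : mono m n) (g : mono m' m) (x : Hom U (X n)) :
  act (mono_comp f g) x = act g (act f x).
Proof. by rewrite sact_comp comp_assoc. Qed.

Lemma face_unique N : (1 < N.+1)%N -> (k < N.+1)%N ->
  forall x x' : Hom U (X N.+1),
  (forall j, act (dface j) x = act (dface j) x') -> x = x'.
Proof.
move=> h1 h2 x x' E.
have [y [_ Uq]] := HF h1 h2 (@ncone_pcone _ X _ (horn_pred N.+1 (inord 1)) _ x).
rewrite -(Uq x) //; apply: Uq => m f H; rewrite /ncone.
case/existsP: H => j /andP [_ jf].
by rewrite -(factorK jf) !act_comp E.
Qed.

Lemma small n : (n <= k.+1)%N -> Ext X (skel_pred n k.+1) U.
Proof.
move=> hn c Hc.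
have Hid : skel_pred n k.+1 (mimage (mono_id n)).
  by rewrite /skel_pred; apply: leq_trans (mimage_card _) _.
exists (c n (mono_id n) Hid); split.
  move=> m f H.
  have H' : skel_pred n k.+1 (mimage (mono_comp (mono_id n) f)) by rewrite mono_comp_id_l.
  rewrite -(Hc _ _ f (mono_id n) Hid H').
  apply: (cone_irr c); exact: mono_comp_id_l.
by move=> x' Hx'; rewrite -(Hx' n (mono_id n) Hid) sact_id comp_id_l.
Qed.

Lemma coskel n : Ext X (skel_pred n k.+1) U.
Proof.
elim/ltn_ind: n => n IH.
case: (leqP n k.+1) => [hn|hn]; first exact: small.
case: n IH hn => [|[|M]] IH hn; try lia.
move=> c Hc.
have hM1 : (1 < M.+2)%N by lia.
have hM2 : (k < M.+2)%N by lia.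
have hN1 : (1 < M.+1)%N by lia.
have hN2 : (k < M.+1)%N by lia.
pose cj (j : 'I_M.+3) m (g : mono m M.+1) (H : skel_pred M.+1 k.+1 (mimage g)) :=
  c m (mono_comp (dface j) g) (sk_d j H).
have Hcj : forall j, pcone X (cj j).
  move=> j m m' g2 g H H'; rewrite /cj -(Hc _ _ g2 _ (sk_d j H) (sk_d j H')).
  apply: (cone_irr c); exact: mono_compA.
have Ey : forall j, exists y : Hom U (X M.+1),
    forall m g H, act g y = cj j m g H.
  by move=> j; have [y [Hy _]] := IH M.+1 (ltnSn _) _ (Hcj j); exists y.
have [y Hy] := fin_all_exists Ey.
have YU : forall j (y' : Hom U (X M.+1)), (forall m g H, act g y' = cj j m g H) -> y' = y j.
  move=> j y' Hy'; have [z [_ Uq]] := IH M.+1 (ltnSn _) _ (Hcj j).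
  by rewrite -(Uq _ Hy') (Uq _ (Hy j)).
have W : forall m (f : mono m M.+2) j j', j \notin mimage f -> j' \notin mimage f ->
    act (factor j f) (y j) = act (factor j' f) (y j').
  move=> m f j j' jf j'f; case: (eqVneq j j') => [<-//|ne].
  pose jj := pt j j'.
  have ljj : lift j jj = j' by rewrite lift_pt // eq_sym.
  pose e := mono_comp (dface j) (dface jj).
  have j'e : j' \notin mimage e.
    rewrite notin_mimage; apply/forallP => z /=; rewrite -ljj; apply/eqP => /lift_inj E.
    by move: (neq_lift jj z); rewrite E eqxx.
  pose b := factor j' e.
  have Eab : act (dface jj) (y j) = act b (y j').
    have Hce : pcone X (fun m (g : mono m M) (H : is_true (skel_pred M k.+1 (mimage g))) =>
        c m (mono_comp (dface j) (mono_comp (dface jj) g)) (sk_d j (sk_d jj H))).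
      move=> m1 m' g2 g H H'; rewrite -(Hc _ _ g2 _ (sk_d j (sk_d jj H)) (sk_d j (sk_d jj H'))).
      apply: (cone_irr c); by rewrite !mono_compA.
    have [z [_ Uq]] := IH M (ltnW (ltnSn _)) _ Hce.
    rewrite -(Uq (act (dface jj) (y j))); last first.
      by move=> m1 g H; rewrite -act_comp (Hy _ _ _ (sk_d jj H)) /cj; apply: (cone_pf c).
    apply: Uq => m1 g H.
    have Hb : skel_pred M.+1 k.+1 (mimage (mono_comp b g)).
      rewrite /skel_pred -(card_mimage_d j') mono_compA /b factorK // /e -mono_compA.
      by rewrite !card_mimage_d.
    rewrite -act_comp (Hy _ _ _ Hb) /cj; apply: (cone_irr c).
    by rewrite mono_compA /b factorK // -mono_compA.
  have jjf : jj \notin mimage (factor j f).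
    rewrite notin_mimage; apply/forallP => z /=; apply/eqP => E.
    have fzj : f z != j by move: jf; rewrite notin_mimage => /forallP.
    have := lift_pt fzj; rewrite E ljj => Ez.
    by move: j'f; rewrite notin_mimage => /forallP /(_ z); rewrite Ez eqxx.
  pose w := factor jj (factor j f).
  have Efa : factor j f = mono_comp (dface jj) w by rewrite factorK.
  have Efe : f = mono_comp e w by rewrite /e -mono_compA -Efa factorK.
  have Efb : factor j' f = mono_comp b w by rewrite {1}Efe factor_comp.
  by rewrite Efa Efb !act_comp Eab.
pose j0 m (f : mono m M.+2) := odflt ord0 [pick j | j \notin mimage f].
have j0P : forall m (f : mono m M.+2) j, j \notin mimage f -> j0 m f \notin mimage f.
  move=> m f j jf; rewrite /j0; case: pickP => [j' //|/(_ j)]; by rewrite jf.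
pose c' m (f : mono m M.+2) (_ : horn_pred M.+2 (inord 1) (mimage f)) :=
  act (factor (j0 m f) f) (y (j0 m f)).
have c'E : forall m f H j, j \notin mimage f -> c' m f H = act (factor j f) (y j).
  by move=> m f H j jf; rewrite /c'; apply: W => //; exact: j0P jf.
have Hc' : pcone X c'.
  move=> m m' g f H H'; case/existsP: (H) => j /andP [_ jf].
  rewrite (c'E _ _ H j jf) (c'E _ _ H' j (notin_comp g jf)).
  by rewrite factor_comp act_comp.
have [x [Hx _]] := HF hM1 hM2 Hc'.
have dx : forall j, act (dface j) x = y j.
  move=> j; apply: (face_unique hN1 hN2) => i.
  rewrite -act_comp.
  have Hh : horn_pred M.+2 (inord 1) (mimage (mono_comp (dface j) (dface i))).
    apply/existsP; case: (eqVneq j (inord 1)) => [Ej|nj].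
      exists (lift j i); rewrite -Ej eq_sym neq_lift /= notin_mimage.
      by apply/forallP => z /=; apply/eqP => /lift_inj E; move: (neq_lift i z); rewrite E eqxx.
    by exists j; rewrite nj /=; exact: j_notin_d.
  by rewrite (Hx _ _ Hh) (c'E _ _ Hh j (j_notin_d _ _)) factor_d.
have ext : forall x1 : Hom U (X M.+2),
    (forall m f H, act f x1 = c m f H) -> forall j, act (dface j) x1 = y j.
  move=> x1 Hx1 j; apply: YU => m g H; by rewrite -act_comp (Hx1 _ _ (sk_d j H)).
exists x; split.
  move=> m f H.
  have [j jf] : exists j, j \notin mimage f.
    apply: exists_missing; move: H; rewrite /skel_pred; lia.
  rewrite -{1}(factorK jf) act_comp dx (Hy _ _ _ (sk_factor jf H)) /cj.
  apply: (cone_irr c); exact: factorK.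
move=> x' Hx'; apply: (face_unique hM1 hM2) => j.
by rewrite dx (ext _ Hx').
Qed.

End Core.
Theorem lemma6p2 (V : DescentCat) (k : nat) (X : sobj V) :
  (0 < k)%N -> is_kcat k X ->
  forall (n : nat) (M : V)
    (pi : forall m, simp (skel k.+1 n) m -> Hom M (X m)) (h : Hom (X n) M),
    is_Map X pi -> is_natmap (@skel_closed n k.+1) pi h -> is_iso h.
Proof.
move=> hk [Hh _] n M pi h HM Hnat.
have [[t Ht] PBs] := dcat_finlim V.
have HF : forall U N, (1 < N.+1)%N -> (k < N.+1)%N -> Ext X (horn_pred N.+1 (inord 1)) U.
  move=> U N h1 h2.
  have [Mh [pih Hpih]] := build X (ex_intro _ t Ht) PBs [set j : 'I_N.+2 | j != inord 1].
  have E1 : forall B, horn_pred N.+1 (inord 1) B -> FP [set j : 'I_N.+2 | j != inord 1] B.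
    by move=> B /existsP [j /andP [j1 jB]]; apply/existsP; exists j; rewrite inE j1.
  have E2 : forall B, FP [set j : 'I_N.+2 | j != inord 1] B -> horn_pred N.+1 (inord 1) B.
    by move=> B /existsP [j /andP [j1 jB]]; apply/existsP; exists j; rewrite -(in_set (fun j => j != inord 1)) j1.
  have HP := pMap_ext E1 E2 Hpih.
  set pih' := (fun m f H => _) in HP.
  have HIM := isMap_of_pMap (@horn_closed N.+1 (inord 1)) HP.
  have Hcone : pcone X (fun m (f : mono m N.+1) (_ : is_true (horn_pred N.+1 (inord 1) (mimage f))) => sact X f).
    by move=> m m' g f H H'; rewrite sact_comp.
  have [hh [Hhh _]] := HP.2 _ _ Hcone.
  have i0 : (0 < @inord N.+1 1)%N by rewrite inordK.
  have i1 : (@inord N.+1 1 < N.+1)%N by rewrite inordK.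
  have [_ Hiso] := Hh N.+1 (inord 1) i0 i1 Mh _ hh HIM (fun m s => Hhh m (sval s) (proj2_sig s)).
  exact: ext_of_iso HP Hhh (Hiso h2) U.
have HMp := pMap_of_isMap HM.
have Hn : pnat X (fun m f H => pi m (exist _ f H)) h.
  by move=> m f H; exact: (Hnat m (exist _ f H)).
apply: (iso_of_ext HMp Hn); [exact: (@coskel _ X k M hk (HF M)) | exact: (@coskel _ X k (X n) hk (HF (X n)))].
Qed.
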